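(* Let $\pi\in S_n$ be shallow. Then: (1) there are no indices $r<i<j<s$ with $\pi_i=n$, $\pi_j=1$ and $\pi_r>\pi_s$ (i.e. $\pi$ avoids the mesh pattern $3\mathbf{4}\mathbf{1}2$, an occurrence of $3412$ whose ''4'' is the entry $n$ and whose ''1'' is the entry $1$); and (2) there are no indices $1<i<j<n$ with $\pi_i>\pi_1>\pi_n>\pi_j$ (i.e. $\pi$ avoids the pattern $\underline{3}41\underline{2}$, an occurrence of $3412$ whose ''3'' is in position $1$ and whose ''2'' is in position $n$).
   Context: For $\pi\in S_n$: $D(\pi)=\sum_{i}|\pi_i-i|$, $I(\pi)$ is the number of inversions, $T(\pi)=n-\mathrm{cyc}(\pi)$ with $\mathrm{cyc}$ the number of cycles in the disjoint cycle decomposition; $\pi$ is shallow if $I(\pi)+T(\pi)=D(\pi)$. *)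

(* Defs.v *)
From mathcomp Require Import all_boot all_fingroup.
Set Implicit Arguments. Unset Strict Implicit. Unset Printing Implicit Defensive.

(* Permutations of {1..n} are modelled as s : 'S_n = {perm 'I_n}, with
   positions and values shifted down by one (0-indexed): pi_i = s (i-1) + 1. *)

Definition absdiff (a b : nat) : nat := (a - b) + (b - a).

Definition displ n (s : 'S_n) : nat := \sum_(i < n) absdiff (s i) i.

Definition inv_count n (s : 'S_n) : nat :=
  #|[set p : 'I_n * 'I_n | (p.1 < p.2) && (s p.2 < s p.1)]|.

Definition ncycles n (s : 'S_n) : nat := #|porbits s|.

Definition tcost n (s : 'S_n) : nat := n - ncycles s.

Definition shallow n (s : 'S_n) : Prop := inv_count s + tcost s = displ s.

(* Main.v *)
Require Import Defs.
From mathcomp Require Import all_boot all_fingroup zify.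
Set Implicit Arguments. Unset Strict Implicit. Unset Printing Implicit Defensive.

Definition s1 n (s : 'S_n.+1) : 'S_n.+1 := (tperm (s^-1 ord_max) ord_max * s)%g.

Lemma s1_max n (s : 'S_n.+1) : s1 s ord_max = ord_max.
Proof. by rewrite /s1 permM tpermR permKV. Qed.

Lemma s1_lift n (s : 'S_n.+1) i : s1 s (lift ord_max i) != ord_max.
Proof.
apply/eqP; rewrite -{2}(s1_max s) => /perm_inj /eqP; by rewrite eq_sym (negbTE (neq_lift _ _)).
Qed.

Definition shf n (s : 'S_n.+1) (i : 'I_n) : 'I_n :=
  odflt i (unlift ord_max (s1 s (lift ord_max i))).

Lemma shfE n (s : 'S_n.+1) i : lift ord_max (shf s i) = s1 s (lift ord_max i).
Proof.
rewrite /shf; case: (unliftP ord_max (s1 s (lift ord_max i))) => [j|] E.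
  by rewrite E.
by move: (s1_lift s i); rewrite E eqxx.
Qed.

Lemma shf_inj n (s : 'S_n.+1) : injective (shf s).
Proof.
move=> i j E; have := congr1 (lift ord_max) E; rewrite !shfE.
by move/perm_inj/lift_inj.
Qed.

Definition shrink n (s : 'S_n.+1) : 'S_n := perm (@shf_inj n s).

Lemma shrinkE n (s : 'S_n.+1) i : lift ord_max (shrink s i) = s1 s (lift ord_max i).
Proof. by rewrite permE shfE. Qed.

Lemma shrink_val n (s : 'S_n.+1) i : (shrink s i : nat) = s1 s (lift ord_max i).
Proof. by rewrite -shrinkE lift_max. Qed.

Lemma s1_lift_perm n (s : 'S_n.+1) : s1 s = lift_perm ord_max ord_max (shrink s).
Proof.
apply/permP => x; case: (unliftP ord_max x) => [j|] ->.
  by rewrite lift_perm_lift shrinkE.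
by rewrite lift_perm_id s1_max.
Qed.

Lemma lpX n (i : 'I_n.+1) (u : 'S_n) k x :
  ((lift_perm i i u) ^+ k)%g (lift i x) = lift i ((u ^+ k)%g x).
Proof.
elim: k => [|k IH]; first by rewrite !expg0 !perm1.
by rewrite !expgSr !permM IH lift_perm_lift.
Qed.

Lemma lpXi n (i : 'I_n.+1) (u : 'S_n) k : ((lift_perm i i u) ^+ k)%g i = i.
Proof.
elim: k => [|k IH]; first by rewrite !expg0 !perm1.
by rewrite !expgSr !permM IH lift_perm_id.
Qed.

Lemma porbit_lp n (i : 'I_n.+1) (u : 'S_n) x :
  porbit (lift_perm i i u) (lift i x) = lift i @: porbit u x.
Proof.
apply/setP => y; apply/porbitP/imsetP => [[k ->]|[z /porbitP [k ->] ->]].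
  by exists ((u ^+ k)%g x); rewrite ?lpX ?mem_porbit.
by exists k; rewrite lpX.
Qed.

Lemma porbit_lpi n (i : 'I_n.+1) (u : 'S_n) :
  porbit (lift_perm i i u) i = [set i].
Proof.
apply/setP => y; rewrite inE; apply/porbitP/eqP => [[k ->]|->].
  by rewrite lpXi.
by exists 0; rewrite expg0 perm1.
Qed.

Lemma porbits_lp n (i : 'I_n.+1) (u : 'S_n) :
  #|porbits (lift_perm i i u)| = #|porbits u| + 1.
Proof.
have -> : porbits (lift_perm i i u) =
   [set i] |: ((fun A : {set 'I_n} => lift i @: A) @: porbits u).
  apply/setP => B; rewrite !inE; apply/imsetP/idP.
    move=> [x _ ->]; case: (unliftP i x) => [j|] ->.
      by rewrite porbit_lp imset_f ?orbT // imset_f.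
    by rewrite porbit_lpi eqxx.
  case/orP => [/eqP ->|/imsetP [A /imsetP [x _ ->] ->]].
    by exists i; rewrite ?porbit_lpi.
  by exists (lift i x); rewrite ?porbit_lp.
rewrite cardsU1 card_imset; last exact: imset_inj (@lift_inj _ i).
suff -> : [set i] \notin ((fun A : {set 'I_n} => lift i @: A) @: porbits u) by rewrite addnC.
apply/imsetP => [[A /imsetP [x _ ->] E]].
have : i \in [set i] by rewrite inE.
by rewrite E => /imsetP [z _ /eqP]; rewrite (negbTE (neq_lift _ _)).
Qed.

Lemma invE n (s : 'S_n) :
  inv_count s = \sum_(i < n) \sum_(j < n) ((i < j) && (s j < s i) : nat).
Proof.
rewrite /inv_count cardsE -sum1_card big_mkcond /=.
rewrite pair_big /=; apply: eq_bigr => p _; rewrite unfold_in; by case: ifP.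
Qed.

Lemma dsplit n (H : 'I_n -> 'I_n -> nat) q :
  \sum_(i < n) \sum_(j < n) H i j + H q q =
  \sum_(j < n) H q j + \sum_(i < n) H i q + \sum_(i < n | i != q) \sum_(j < n | j != q) H i j.
Proof.
rewrite (bigD1 q) //= [\sum_(i < n) H i q](bigD1 q) //=.
have -> : \sum_(i < n | i != q) \sum_j H i j =
   \sum_(i < n | i != q) H i q + \sum_(i < n | i != q) \sum_(j < n | j != q) H i j.
  rewrite -big_split /=; apply: eq_bigr => i _; by rewrite (bigD1 q).
set X := \sum_(i < n | i != q) H i q; set Y := \sum_(i < n | i != q) \sum_(j < n | j != q) H i j; lia.
Qed.

Lemma dswap n (F G : 'I_n -> 'I_n -> nat) q :
  (forall i j, i != q -> j != q -> F i j = G i j) -> F q q = G q q ->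
  \sum_(i < n) \sum_(j < n) F i j + \sum_(j < n) G q j + \sum_(i < n) G i q =
  \sum_(i < n) \sum_(j < n) G i j + \sum_(j < n) F q j + \sum_(i < n) F i q.
Proof.
move=> HFG Hqq; have := dsplit F q; have := dsplit G q.
have -> : \sum_(i < n | i != q) \sum_(j < n | j != q) F i j =
          \sum_(i < n | i != q) \sum_(j < n | j != q) G i j.
  by apply: eq_bigr => i Hi; apply: eq_bigr => j Hj; apply: HFG.
lia.
Qed.

Lemma count_gt n k : \sum_(j < n) ((k < j) : nat) = n - k.+1.
Proof.
elim: n => [|n IH]; first by rewrite big_ord0.
rewrite big_ord_recr /= IH; case: ltnP => H; lia.
Qed.

Lemma count_gt_perm n (s : 'S_n) k : \sum_(j < n) ((k < s j) : nat) = n - k.+1.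
Proof.
by rewrite -count_gt [RHS](reindex_inj (@perm_inj _ s)).
Qed.

Lemma sum_eq1 n (q : 'I_n) : \sum_(i < n) ((i == q) : nat) = 1.
Proof.
rewrite (bigD1 q) //= eqxx big1 // => i /negbTE ->; by [].
Qed.

Lemma sum_pos n (P : 'I_n -> bool) i : P i -> 0 < \sum_(j < n) (P j : nat).
Proof. by move=> Pi; rewrite (bigD1 i) //= Pi. Qed.

Lemma sum_zero n (P : 'I_n -> bool) : \sum_(j < n) (P j : nat) = 0 -> forall i, ~~ P i.
Proof.
move=> /eqP; rewrite sum_nat_eq0 => /forallP H i.
by move: (H i); case: (P i).
Qed.

Notation w := (widen_ord (leqnSn _)).

Lemma lw n (i : 'I_n) : lift ord_max i = w i.
Proof. by apply: val_inj; rewrite [LHS]lift_max. Qed.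

Lemma shrink_w n (s : 'S_n.+1) i : (shrink s i : nat) = s1 s (w i).
Proof. by rewrite shrink_val lw. Qed.

Lemma s1E n (s : 'S_n.+1) x : s1 s x = s (tperm ((s^-1)%g ord_max) ord_max x).
Proof. by rewrite /s1 permM. Qed.

Lemma displE n (s : 'S_n.+1) :
  displ s = \sum_(i < n) absdiff (s (w i)) i + absdiff (s ord_max) n.
Proof. by rewrite /displ big_ord_recr. Qed.

Lemma displ' n (s : 'S_n.+1) :
  displ (shrink s) = \sum_(i < n) absdiff (s1 s (w i)) i.
Proof. by rewrite /displ; apply: eq_bigr => i _; rewrite shrink_w. Qed.

Lemma invE1 n (s : 'S_n.+1) :
  inv_count s = \sum_(i < n) \sum_(j < n) ((i < j) && (s (w j) < s (w i)) : nat)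
     + \sum_(i < n) ((s ord_max < s (w i)) : nat).
Proof.
rewrite invE [LHS]big_ord_recr /=.
rewrite [X in _ + X = _]big1; last first.
  move=> j _; rewrite ltnNge -ltnS ltn_ord //.
rewrite addn0 -big_split /=; apply: eq_bigr => i _.
by rewrite big_ord_recr /= ltn_ord.
Qed.

Lemma invE' n (s : 'S_n.+1) :
  inv_count (shrink s) =
  \sum_(i < n) \sum_(j < n) ((i < j) && (s1 s (w j) < s1 s (w i)) : nat).
Proof.
rewrite invE; apply: eq_bigr => i _; apply: eq_bigr => j _.
by rewrite !shrink_w.
Qed.

Lemma porbits_le n (u : 'S_n) : #|porbits u| <= n.
Proof. by rewrite /porbits; apply: leq_trans (leq_imset_card _ _) _; rewrite card_ord. Qed.

Lemma porbits_rel n (s : 'S_n.+1) :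
  #|porbits (shrink s)| + 1 = #|porbits s| + ((s^-1)%g ord_max != ord_max).
Proof.
rewrite -(porbits_lp ord_max) -s1_lift_perm -porbits_mul_tperm.
suff -> : (s^-1)%g ord_max \in porbit s ord_max by rewrite addn0.
by rewrite porbit_sym -{1}(permKV s ord_max) -{1}[s]expg1 mem_porbit.
Qed.

Definition Aq n (s : 'S_n.+1) :=
  \sum_(i < n) ((i < (s^-1)%g ord_max) && (s ord_max < s (w i)) : nat).
Definition Bq n (s : 'S_n.+1) :=
  \sum_(i < n) (((s^-1)%g ord_max < i) && (s (w i) < s ord_max) : nat).

Lemma perm_val_inj n (s : 'S_n) x y : (s x : nat) = s y -> x = y.
Proof. by move/val_inj/perm_inj. Qed.

Lemma key n (s : 'S_n.+1) :
  inv_count s + tcost s + displ (shrink s) + 2 * minn (Aq s) (Bq s) =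
  displ s + inv_count (shrink s) + tcost (shrink s).
Proof.
have Hpr := porbits_rel s; have Hle := porbits_le (shrink s).
have Hsq : s ((s^-1)%g ord_max) = ord_max by rewrite permKV.
rewrite /tcost /ncycles displE displ' invE1 invE' /Aq /Bq.
have hle : forall i : 'I_n, (s (w i) : nat) <= n by move=> i; rewrite -ltnS.
case: (unliftP ord_max ((s^-1)%g ord_max)) => [q0|] Eq; last first.
  have Hv : s ord_max = ord_max by rewrite -{1}Eq.
  have Hs1 : forall x, s1 s x = s x.
    by move=> x; rewrite s1E Eq tperm1 perm1.
  rewrite Eq eqxx /= in Hpr *; rewrite Hv.
  have -> : \sum_(i < n) absdiff (s1 s (w i)) i = \sum_(i < n) absdiff (s (w i)) i.
    by apply: eq_bigr => i _; rewrite Hs1.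
  have -> : \sum_(i < n) \sum_(j < n) ((i < j) && (s1 s (w j) < s1 s (w i)) : nat) =
     \sum_(i < n) \sum_(j < n) ((i < j) && (s (w j) < s (w i)) : nat).
    by apply: eq_bigr => i _; apply: eq_bigr => j _; rewrite !Hs1.
  have vom : ((ord_max : 'I_n.+1) : nat) = n by [].
  rewrite [X in minn X _]big1; last by move=> i _; rewrite vom ltn_ord /= ltnNge hle.
  rewrite [X in minn _ X]big1; last by move=> i _; rewrite ltnNge (ltnW (ltn_ord i)).
  rewrite [X in _ + X + (_ - _)]big1; last by move=> i _; rewrite vom ltnNge hle.
  rewrite /absdiff vom subnn; set X := \sum_(i < n) \sum_(j < n) _; set Y := \sum_(i < n) _; move: Hpr Hle; set P1 := #|porbits s|; set P2 := #|porbits _|; lia.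
rewrite Eq eq_sym neq_lift /= in Hpr.
have [q {}Eq] : exists q : 'I_n, (s^-1)%g ord_max = w q by exists q0; rewrite Eq lw.
rewrite Eq.
have hs1q : s1 s (w q) = s ord_max by rewrite s1E -Eq tpermL.
have hs1 : forall i, i != q -> s1 s (w i) = s (w i).
  move=> i Hi; rewrite s1E tpermD //.
    rewrite Eq; apply: contra Hi => /eqP /(congr1 val) /= E.
    by apply/eqP; apply: val_inj.
  by rewrite -lw neq_lift.
have hsq : (s (w q) : nat) = n by rewrite -Eq Hsq.
have hlt : forall i, i != q -> (s (w i) : nat) < n.
  move=> i Hi; rewrite ltn_neqAle hle andbT; apply/eqP => E.
  have : s (w i) = s (w q) by apply: val_inj; rewrite /= E hsq.
  move/perm_inj/(congr1 val) => /= E2.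
  by move: Hi; rewrite (_ : i = q) ?eqxx //; apply: val_inj.
have hv : forall i, (s (w i) : nat) != s ord_max.
  move=> i; apply/eqP => /perm_val_inj /(congr1 val) /=.
  by move=> E; move: (ltn_ord i); rewrite E ltnn.
have hvn : (s ord_max : nat) < n.
  rewrite ltn_neqAle -ltnS ltn_ord andbT; apply/eqP => E.
  have : s ord_max = s (w q) by apply: val_inj; rewrite /= hsq E.
  by move/perm_inj => /(congr1 val) /= E2; move: (ltn_ord q); rewrite -E2 ltnn.
set v := (s ord_max : nat).
have HD : \sum_(i < n) absdiff (s (w i)) i + absdiff v q =
          \sum_(i < n) absdiff (s1 s (w i)) i + absdiff n q.
  rewrite (bigD1 q) //= [\sum_(i < n) absdiff (s1 s (w i)) i](bigD1 q) //=.
  rewrite hs1q hsq.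
  have -> : \sum_(i < n | i != q) absdiff (s1 s (w i)) i =
            \sum_(i < n | i != q) absdiff (s (w i)) i.
    by apply: eq_bigr => i Hi; rewrite hs1.
  rewrite /v; set X := \sum_(i < n | i != q) _; lia.
pose F := fun i j : 'I_n => ((i < j) && (s (w j) < s (w i)) : nat).
pose G := fun i j : 'I_n => ((i < j) && (s1 s (w j) < s1 s (w i)) : nat).
have HS := @dswap n F G q.
have HS' : forall i j, i != q -> j != q -> F i j = G i j.
  by move=> i j Hi Hj; rewrite /F /G !hs1.
have := HS HS'; rewrite /F /G ltnn /= => {HS HS'} HS.
have {}HS := HS erefl.
have e1 : \sum_(j < n) ((q < j) && (s1 s (w j) < s1 s (w q)) : nat) =
          \sum_(i < n) ((q < i) && (s (w i) < v) : nat).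
  apply: eq_bigr => j _; rewrite hs1q; case: ltngtP => //= Hj.
  by rewrite hs1 // neq_ltn Hj orbT.
have e2 : \sum_(i < n) ((i < q) && (s1 s (w q) < s1 s (w i)) : nat) =
          \sum_(i < n) ((i < q) && (v < s (w i)) : nat).
  apply: eq_bigr => j _; rewrite hs1q; case: ltngtP => //= Hj.
  by rewrite hs1 // neq_ltn Hj.
have e3 : \sum_(j < n) ((q < j) && (s (w j) < s (w q)) : nat) = n - q.+1.
  rewrite -count_gt; apply: eq_bigr => j _; rewrite hsq.
  case: ltngtP => //= Hj; rewrite hlt //; by rewrite neq_ltn Hj orbT.
have e4 : \sum_(i < n) ((i < q) && (s (w q) < s (w i)) : nat) = 0.
  by rewrite big1 // => i _; rewrite hsq [n < _]ltnNge hle andbF.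
rewrite e1 e2 e3 e4 in HS.
have eC : \sum_(i < n) ((v < s (w i)) : nat) = n - v.
  have := count_gt_perm s v; rewrite big_ord_recr /= ltnn addn0 => ->; lia.
have eC2 : \sum_(i < n) ((v < s (w i)) : nat) =
   \sum_(i < n) ((i < q) && (v < s (w i)) : nat) + 1 +
   \sum_(i < n) ((q < i) && (v < s (w i)) : nat).
  rewrite -(sum_eq1 q) -!big_split /=; apply: eq_bigr => i _.
  case: (ltngtP i q) => Hi /=.
  - have -> : (i == q) = false by apply/eqP => E; move: Hi; rewrite E ltnn.
    by rewrite /= !addn0.
  - have -> : (i == q) = false by apply/eqP => E; move: Hi; rewrite E ltnn.
    by rewrite /= addn0 add0n.
  - by rewrite (_ : i = q) ?eqxx ?hsq ?hvn //; apply: val_inj.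
have eR : n - q.+1 =
   \sum_(i < n) ((q < i) && (s (w i) < v) : nat) +
   \sum_(i < n) ((q < i) && (v < s (w i)) : nat).
  rewrite -count_gt -big_split /=; apply: eq_bigr => i _.
  case: (ltnP q i) => //= _; have := hv i; rewrite /v; case: ltngtP => //.
move: HD HS eC eC2 eR Hpr Hle.
set X := \sum_(i < n) \sum_(j < n) _.
set Y := \sum_(i < n) \sum_(j < n) _.
set A := \sum_(i < n) ((i < q) && (v < s (w i)) : nat).
set B := \sum_(i < n) ((q < i) && (s (w i) < v) : nat).
set C := \sum_(i < n) ((v < s (w i)) : nat).
set c := \sum_(i < n) ((q < i) && (v < s (w i)) : nat).
set S := \sum_(i < n) absdiff (s (w i)) i.
set S1 := \sum_(i < n) absdiff (s1 s (w i)) i.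
set P := #|porbits s|. set P' := #|porbits (shrink s)|.
clear e1 e2 e3 e4; clearbody X Y A B C c S S1 P P' v. move: (ltn_ord q) hvn. rewrite /absdiff. lia.
Qed.

Definition PG n (s : 'S_n) := exists r i j t : 'I_n,
  r < i /\ i < j /\ j < t /\ (forall k : 'I_n, k < i -> s k < s i) /\
  (s j : nat) = 0 /\ s t < s r.

Definition PH n (s : 'S_n) := exists f i j q : 'I_n,
  (f : nat) = 0 /\ f < i /\ i < j /\ j < q /\ s f < s i /\ s q < s f /\
  s j < s q /\ (forall k : 'I_n, q < k -> s q < s k).

Lemma shv n (s : 'S_n.+1) (k : 'I_n) :
  (shrink s k : nat) = if (k : nat) == ((s^-1)%g ord_max : nat) then s ord_max else s (w k).
Proof.
rewrite shrink_w s1E; case: eqP => H.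
  by rewrite (_ : w k = (s^-1)%g ord_max) ?tpermL //; apply: val_inj.
rewrite tpermD //; last by rewrite -lw neq_lift.
by apply/eqP => /(congr1 val) E; apply: H; rewrite E.

Qed.

Lemma down n (x : 'I_n.+1) : x < n -> exists x' : 'I_n, (x' : nat) = x.
Proof. by move=> H; exists (Ordinal H). Qed.

Lemma wv n (x : 'I_n) : (w x : nat) = x. Proof. by []. Qed.

Lemma inj_nat n (s : 'S_n) (x y : 'I_n) : (s x : nat) = s y -> (x : nat) = y.
Proof. by move/val_inj/perm_inj => ->. Qed.

Lemma sQn n (s : 'S_n.+1) : (s ((s^-1)%g ord_max) : nat) = n.
Proof. by rewrite permKV. Qed.

Lemma Apos n (s : 'S_n.+1) (k : 'I_n.+1) :
  k < (s^-1)%g ord_max -> s ord_max < s k -> 0 < Aq s.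
Proof.
move=> H1 H2; have [k' Hk'] := @down n k ltac:(move: (ltn_ord ((s^-1)%g ord_max)); lia).
apply: (@sum_pos _ _ k'); rewrite Hk' H1 /=.
by rewrite (_ : w k' = k) //; apply: val_inj; rewrite /= Hk'.
Qed.

Lemma Bpos n (s : 'S_n.+1) (k : 'I_n.+1) :
  (s^-1)%g ord_max < k -> k < n -> s k < s ord_max -> 0 < Bq s.
Proof.
move=> H1 H0 H2; have [k' Hk'] := @down n k H0.
apply: (@sum_pos _ _ k'); rewrite Hk' H1 /=.
by rewrite (_ : w k' = k) //; apply: val_inj; rewrite /= Hk'.
Qed.

Lemma Azero n (s : 'S_n.+1) (k : 'I_n) :
  Aq s = 0 -> k < (s^-1)%g ord_max -> s (w k) <= s ord_max.
Proof.
move=> /sum_zero /(_ k) H Hk; move: H; rewrite Hk /= -leqNgt; by [].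
Qed.

Lemma Bzero n (s : 'S_n.+1) (k : 'I_n) :
  Bq s = 0 -> (s^-1)%g ord_max < k -> s ord_max <= s (w k).
Proof.
move=> /sum_zero /(_ k) H Hk; move: H; rewrite Hk /= -leqNgt; by [].
Qed.

Lemma downs n (s : 'S_n.+1) (x : 'I_n.+1) : x < n -> exists x' : 'I_n,
  (x' : nat) = x /\ (shrink s x' : nat) =
  if (x : nat) == ((s^-1)%g ord_max : nat) then s ord_max else s x.
Proof.
move=> H; have [x' Hx] := down H; exists x'; split => //.
by rewrite shv Hx (_ : w x' = x) //; apply: val_inj.
Qed.

Lemma eqv n (s : 'S_n) (x y : 'I_n) : (x : nat) = y -> (s x : nat) = s y.
Proof. by move/val_inj ->. Qed.

Lemma transG n (s : 'S_n.+1) : PG s -> (0 < Aq s /\ 0 < Bq s) \/ PG (shrink s).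
Proof.
move=> [r [i [j [t [Hri [Hij [Hjt [Hmax [Hj0 Hrt]]]]]]]]].
have sQ := sQn s.
set Q := (s^-1)%g ord_max in sQ *.
have bt := ltn_ord t; have bsr := ltn_ord (s r); have bsi := ltn_ord (s i).
have bQ := ltn_ord Q; have bsm := ltn_ord (s ord_max).
have hi : (i : nat) <= Q.
  rewrite leqNgt; apply/negP => H; have := Hmax _ H; rewrite sQ; lia.
have hjQ : (j : nat) != Q.
  apply/eqP => E; have := eqv s E; lia.
have vnz : (s ord_max : nat) != 0.
  apply/eqP => E; have : (s ord_max : nat) = s j by rewrite E Hj0.
  move/inj_nat => /= E2; lia.
have wk : forall k : 'I_n, (w k : nat) = k by [].
have wkQ : forall k : 'I_n, (k : nat) != n.
  by move=> k; move: (ltn_ord k); lia.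
case: (ltngtP Q j) => HQj; last by rewrite HQj eqxx in hjQ.
-
  have Bp : 0 < Bq s.
    apply: (@Bpos _ _ j); rewrite -/Q; lia.
  case: (eqVneq (t : nat) n) => Htn.
    left; split => //; apply: (@Apos _ _ r); rewrite -/Q; first lia.
    have := @eqv _ s t ord_max Htn; lia.
  case: (posnP (Aq s)) => HA; last by left.
  right.
  have [r' [Hr' Hsr]] := downs s (x := r) ltac:(lia).
  have [i' [Hi' Hsi]] := downs s (x := i) ltac:(lia).
  have [j' [Hj' Hsj]] := downs s (x := j) ltac:(lia).
  have [t' [Ht' Hst]] := downs s (x := t) ltac:(lia).
  exists r', i', j', t'; rewrite Hr' Hi' Hj' Ht' Hsr Hsi Hsj Hst.
  rewrite (negbTE hjQ).
  have -> : ((r : nat) == Q) = false by apply/eqP; lia.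
  have -> : ((t : nat) == Q) = false by apply/eqP; lia.
  do 3 (split; first lia); split; last by split.
  move=> k Hk; rewrite shv.
  have -> : ((k : nat) == Q) = false by apply/eqP; lia.
  case: eqP => HiQ.
    have := Azero HA (_ : (k : nat) < Q); rewrite -HiQ => /(_ Hk) H.
    rewrite ltn_neqAle H andbT; apply/eqP => /inj_nat; rewrite wk => E; move: (ltn_ord k); rewrite E (_ : ((ord_max : 'I_n.+1) : nat) = n) //; lia.
  by apply: Hmax; rewrite wk.
-
  right.
  have HQt : (Q : nat) != t.
    apply/eqP => E; have := eqv s E; rewrite sQ; move: (ltn_ord (s t)); lia.
  case: (eqVneq (t : nat) n) => Htn.
    have [r' [Hr' Hsr]] := downs s (x := r) ltac:(lia).
    have [i' [Hi' Hsi]] := downs s (x := i) ltac:(lia).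
    have [j' [Hj' Hsj]] := downs s (x := j) ltac:(lia).
    have [t' [Ht' Hst]] := downs s (x := Q) ltac:(lia).
    exists r', i', j', t'; rewrite Hr' Hi' Hj' Ht' Hsr Hsi Hsj Hst eqxx.
    rewrite (negbTE hjQ).
    have -> : ((r : nat) == Q) = false by apply/eqP; lia.
    have -> : ((i : nat) == Q) = false by apply/eqP; lia.
    do 3 (split; first lia); split.
      move=> k Hk; rewrite shv.
      have -> : ((k : nat) == Q) = false by apply/eqP; lia.
      by apply: Hmax; rewrite wk.
    by split => //; have := @eqv _ s t ord_max Htn; lia.
  have [r' [Hr' Hsr]] := downs s (x := r) ltac:(lia).
  have [i' [Hi' Hsi]] := downs s (x := i) ltac:(lia).
  have [j' [Hj' Hsj]] := downs s (x := j) ltac:(lia).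
  have [t' [Ht' Hst]] := downs s (x := t) ltac:(lia).
  exists r', i', j', t'; rewrite Hr' Hi' Hj' Ht' Hsr Hsi Hsj Hst.
  rewrite (negbTE hjQ).
  have -> : ((r : nat) == Q) = false by apply/eqP; lia.
  have -> : ((i : nat) == Q) = false by apply/eqP; lia.
  have -> : ((t : nat) == Q) = false by apply/eqP; lia.
  do 3 (split; first lia); split; last by split.
  move=> k Hk; rewrite shv.
  have -> : ((k : nat) == Q) = false by apply/eqP; lia.
  by apply: Hmax; rewrite wk.
Qed.

Lemma transH n (s : 'S_n.+1) : PH s -> (0 < Aq s /\ 0 < Bq s) \/ PH (shrink s).
Proof.
move=> [f [i [j [q0 [Hf [Hfi [Hij [Hjq [Hsfi [Hsqf [Hsjq Hq0]]]]]]]]]]].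
have sQ := sQn s.
set Q := (s^-1)%g ord_max in sQ *.
have bq := ltn_ord q0; have bsi := ltn_ord (s i); have bQ := ltn_ord Q.
have bsm := ltn_ord (s ord_max); have bsk := fun k => ltn_ord (s k).
have vom : ((ord_max : 'I_n.+1) : nat) = n by [].
have wk : forall k : 'I_n, (w k : nat) = k by [].
have nQ : forall x : 'I_n.+1, (s x : nat) < n -> (x : nat) != Q.
  by move=> x Hx; apply/eqP => E; have := eqv s E; lia.
have hfQ := nQ f ltac:(lia); have hq0Q := nQ q0 ltac:(lia).
have hjQ := nQ j ltac:(lia).
have injm : forall k : 'I_n.+1, (k : nat) < n -> (s k : nat) != s ord_max.
  by move=> k Hk; apply/eqP => /inj_nat; rewrite vom; lia.
case: (eqVneq (Q : nat) n) => HQn.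
  right.
  have [f' [Hf' Hsf]] := downs s (x := f) ltac:(lia).
  have [i' [Hi' Hsi]] := downs s (x := i) ltac:(lia).
  have [j' [Hj' Hsj]] := downs s (x := j) ltac:(lia).
  have [q' [Hq' Hsq]] := downs s (x := q0) ltac:(lia).
  exists f', i', j', q'; rewrite Hf' Hi' Hj' Hq' Hsf Hsi Hsj Hsq.
  rewrite (negbTE hfQ) (negbTE hjQ) (negbTE hq0Q).
  have -> : ((i : nat) == Q) = false by apply/eqP; lia.
  do 7 (split; first lia).
  move=> k Hk; rewrite shv.
  have -> : ((k : nat) == Q) = false by apply/eqP; move: (ltn_ord k); lia.
  by apply: Hq0; rewrite wk.
case: (ltngtP Q q0) => HQq; last by move: hq0Q; rewrite HQq eqxx.
-
  case: (eqVneq (q0 : nat) n) => Hqn.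
    have Ap : 0 < Aq s.
      apply: (@Apos _ _ f); rewrite -/Q; first lia.
      have := @eqv _ s q0 ord_max Hqn; lia.
    case: (ltngtP Q j) => HQj; last by move: hjQ; rewrite HQj eqxx.
      left; split => //; apply: (@Bpos _ _ j); rewrite -/Q; try lia.
      have := @eqv _ s q0 ord_max Hqn; lia.
    case: (posnP (Bq s)) => HB; last by left.
    right.
    have [f' [Hf' Hsf]] := downs s (x := f) ltac:(lia).
    have [i' [Hi' Hsi]] := downs s (x := i) ltac:(lia).
    have [j' [Hj' Hsj]] := downs s (x := j) ltac:(lia).
    have [q' [Hq' Hsq]] := downs s (x := Q) ltac:(lia).
    exists f', i', j', q'; rewrite Hf' Hi' Hj' Hq' Hsf Hsi Hsj Hsq eqxx.
    rewrite (negbTE hfQ) (negbTE hjQ).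
    have -> : ((i : nat) == Q) = false by apply/eqP; lia.
    have Hv := @eqv _ s q0 ord_max Hqn.
    do 7 (split; first lia).
    move=> k Hk; rewrite shv.
    have -> : ((k : nat) == Q) = false by apply/eqP; lia.
    have := Bzero HB (_ : Q < k); rewrite -/Q => /(_ Hk) H.
    rewrite ltn_neqAle H andbT eq_sym; apply: injm; rewrite wk; exact: ltn_ord.
  have Bp : 0 < Bq s.
    apply: (@Bpos _ _ q0); rewrite -/Q; try lia.
    apply: Hq0; rewrite vom; lia.
  case: (posnP (Aq s)) => HA; last by left.
  right.
  have [f' [Hf' Hsf]] := downs s (x := f) ltac:(lia).
  have [i' [Hi' Hsi]] := downs s (x := i) ltac:(lia).
  have [j' [Hj' Hsj]] := downs s (x := j) ltac:(lia).
  have [q' [Hq' Hsq]] := downs s (x := q0) ltac:(lia).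
  exists f', i', j', q'; rewrite Hf' Hi' Hj' Hq' Hsf Hsi Hsj Hsq.
  rewrite (negbTE hfQ) (negbTE hjQ) (negbTE hq0Q).
  have Hfv : (s f : nat) < s ord_max.
    have [f2 Hf2] := @down n f ltac:(lia).
    have hf2 : (f2 : nat) < Q by move: hfQ; rewrite Hf2; lia.
    have := Azero HA hf2.
    rewrite (_ : w f2 = f); last by apply: val_inj; rewrite /= Hf2.
    have hfn : (f : nat) < n by lia.
    by rewrite leq_eqVlt (negbTE (injm _ hfn)).
  do 4 (split; first lia).
  split; first by case: eqP => _; lia.
  do 2 (split; first lia).
  move=> k Hk; rewrite shv.
  have -> : ((k : nat) == Q) = false by apply/eqP; lia.
  by apply: Hq0; rewrite wk.
-
  right.
  have [f' [Hf' Hsf]] := downs s (x := f) ltac:(lia).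
  have [i' [Hi' Hsi]] := downs s (x := i) ltac:(lia).
  have [j' [Hj' Hsj]] := downs s (x := j) ltac:(lia).
  have [q' [Hq' Hsq]] := downs s (x := q0) ltac:(lia).
  exists f', i', j', q'; rewrite Hf' Hi' Hj' Hq' Hsf Hsi Hsj Hsq.
  rewrite (negbTE hfQ) (negbTE hjQ) (negbTE hq0Q).
  have -> : ((i : nat) == Q) = false by apply/eqP; lia.
  do 7 (split; first lia).
  move=> k Hk; rewrite shv.
  case: eqP => _; last by apply: Hq0; rewrite wk.
  apply: Hq0; rewrite vom; lia.
Qed.

Lemma main n (s : 'S_n) :
  inv_count s + tcost s <= displ s /\
  (PG s -> inv_count s + tcost s < displ s) /\
  (PH s -> inv_count s + tcost s < displ s).
Proof.
elim: n s => [|n IH] s.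
  split; last by split => [[r _]|[r _]]; case: r.
  by rewrite invE /tcost big_ord0 sub0n.
have K := key s; have [IH1 [IH2 IH3]] := IH (shrink s).
split; first lia.
split => HP.
  case: (transG HP) => [[HA HB]|HP']; last by have := IH2 HP'; lia.
  have : 0 < minn (Aq s) (Bq s) by rewrite leq_min HA HB.
  lia.
case: (transH HP) => [[HA HB]|HP']; last by have := IH3 HP'; lia.
have : 0 < minn (Aq s) (Bq s) by rewrite leq_min HA HB.
lia.
Qed.

Unset Implicit Arguments.

Theorem theorem2p8 (n : nat) (s : 'S_n) :
  shallow s ->
  (~ exists r i j t : 'I_n,
       r < i /\ i < j /\ j < t /\
       (s i : nat) = n.-1 /\ (s j : nat) = 0 /\ s t < s r) /\
  (~ exists f i j l : 'I_n,
       (f : nat) = 0 /\ (l : nat) = n.-1 /\ f < i /\ i < j /\ j < l /\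
       s f < s i /\ s l < s f /\ s j < s l).
Proof.
rewrite /shallow => Hs; have [_ [HG HH]] := main s.
split.
  move=> [r [i [j [t [Hri [Hij [Hjt [Hi [Hj Ht]]]]]]]]].
  suff : PG s by move/HG; lia.
  exists r, i, j, t; do 3 (split => //); split => //.
  move=> k Hk; have := ltn_ord (s k); rewrite Hi -subn1 => H1.
  have : (s k : nat) != s i.
    by apply/eqP => /inj_nat E; lia.
  rewrite Hi -subn1; lia.
move=> [f [i [j [l [Hf [Hl [Hfi [Hij [Hjl [H1 [H2 H3]]]]]]]]]]].
suff : PH s by move/HH; lia.
exists f, i, j, l; do 7 (split => //).
move=> k Hk; have := ltn_ord k; rewrite -subn1 in Hl; lia.
Qed.
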